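(* Let $P$ be a finite poset. If $I\subseteq P$ is a poset ideal, then $\mathfrak{p}(I)=(x_p)_{p\in I}\subseteq k[x_P]$ is a $P$-stable monomial prime ideal. Conversely every $P$-stable monomial prime ideal $\mathfrak{p}(S)=(x_p)_{p\in S}$, $S\subseteq P$, is of this form, i.e. $S$ is a poset ideal.
   Context: $k$ is a field and $k[x_P]$ the polynomial ring in variables $x_p$, $p\in P$. For $b\in P$, a $b$-chain is a multichain $C: p_1\le\dots\le p_r$ with $p_r\le b$; its length is $r$, $m_C=\prod x_{p_i}$; $C$ is in a monomial $m$ if $m_C\mid m$; a longest $b$-chain in $m$ is one of maximal length among $b$-chains in $m$; $C$ goes through $a$ if $a\le b$ and $a$ is comparable to every $p_i$. For an antichain $B$, $m_B=\prod_{b\in B}x_b$. A monomial ideal $I$ is $P$-stable if whenever $m=n\,m_B\in I$ ($n$ a monomial, $B$ an antichain) and $a\in P$ is such that for every $b\in B$ some longest $b$-chain in $m$ goes through $a$, then $n\,x_a\in I$. *)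

(* Defs.v *)
From HB Require Import structures.
From mathcomp Require Import all_boot all_order all_algebra.
From mathcomp Require Import mpoly.
Set Implicit Arguments. Unset Strict Implicit. Unset Printing Implicit Defensive.
Import Order.TTheory GRing.Theory.
Local Open Scope ring_scope.
Local Open Scope order_scope.

Section PStable.
Variables (k : fieldType) (disp : Order.disp_t) (P : finPOrderType disp).

Definition kxP := {mpoly k[#|P|]}.
Definition var (p : P) : kxP := 'X_(enum_rank p).

Definition mono (e : P -> nat) : kxP := \prod_(p : P) var p ^+ e p.

Definition mB (B : {set P}) : kxP := \prod_(b in B) var b.

Definition antichain (B : {set P}) : Prop :=
  forall x y, x \in B -> y \in B -> x <= y -> x = y.

Definition poset_ideal (S : {set P}) : Prop :=
  forall x y, y \in S -> x <= y -> x \in S.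

Definition bchain (b : P) (C : seq P) : Prop :=
  sorted <=%O C /\ last b C <= b.

(* C is in the monomial with exponent function e: m_C divides it *)
Definition chain_in (e : P -> nat) (C : seq P) : Prop :=
  forall p, (count_mem p C <= e p)%N.

Definition longest_bchain_in (e : P -> nat) (b : P) (C : seq P) : Prop :=
  [/\ bchain b C, chain_in e C &
      forall C', bchain b C' -> chain_in e C' -> (size C' <= size C)%N].

Definition goes_through (a b : P) (C : seq P) : Prop :=
  a <= b /\ all (fun p => (a <= p) || (p <= a)) C.

(* P-stability of a (monomial) ideal I, given as a predicate on k[x_P].
   For m = n * m_B, the exponent function of m is  p |-> n p + [p \in B]. *)
Definition P_stable (I : kxP -> Prop) : Prop :=
  forall (n : P -> nat) (B : {set P}) (a : P),
    antichain B ->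
    I (mono n * mB B) ->
    (forall b, b \in B ->
       exists C, longest_bchain_in (fun p => (n p + (p \in B))%N) b C
                 /\ goes_through a b C) ->
    I (mono n * var a).

Definition pideal (S : {set P}) (f : kxP) : Prop :=
  exists c : P -> kxP, f = \sum_(p in S) c p * var p.

Definition prime_ideal (I : kxP -> Prop) : Prop :=
  [/\ I 0,
      forall f g, I f -> I g -> I (f + g),
      forall f g, I g -> I (f * g),
      ~ I 1 &
      forall f g, I (f * g) -> I f \/ I g].

(* I is a monomial ideal: generated by monomials, i.e. a polynomial lies in I
   iff each of its terms does. *)
Definition monomial_ideal (I : kxP -> Prop) : Prop :=
  forall f : kxP, I f <-> (forall m, m \in msupp f -> I 'X_[m]).

End PStable.

(* Main.v *)
Require Import Defs.
From HB Require Import structures.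
From mathcomp Require Import all_boot all_order all_algebra.
From mathcomp Require Import mpoly.

Set Implicit Arguments. Unset Strict Implicit. Unset Printing Implicit Defensive.
Import Order.TTheory GRing.Theory.

Section Aux.
Variables (k : fieldType) (disp : Order.disp_t) (P : finPOrderType disp) (S : {set P}).
Local Open Scope ring_scope.
Implicit Types (f g : kxP k P).

Definition lq : #|P|.-tuple (kxP k P) :=
  [tuple (if enum_val i \in S then 0 else 'X_i) | i < #|P|].

Definition phi (f : kxP k P) : kxP k P := f \mPo lq.

Lemma phiM f g : phi (f * g) = phi f * phi g.
Proof. exact: (rmorphM (comp_mpoly lq : {mpoly k[#|P|]} -> {mpoly k[#|P|]})). Qed.

Lemma phi1 : phi 1 = 1.
Proof. exact: comp_mpoly1. Qed.

Lemma phi_sum (I : Type) (r : seq I) (F : I -> kxP k P) (Q : pred I) :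
  phi (\sum_(i <- r | Q i) F i) = \sum_(i <- r | Q i) phi (F i).
Proof. exact: (raddf_sum (comp_mpoly lq : {mpoly k[#|P|]} -> {mpoly k[#|P|]})). Qed.

Lemma phi_prod (I : Type) (r : seq I) (F : I -> kxP k P) (Q : pred I) :
  phi (\prod_(i <- r | Q i) F i) = \prod_(i <- r | Q i) phi (F i).
Proof. exact: (rmorph_prod (comp_mpoly lq : {mpoly k[#|P|]} -> {mpoly k[#|P|]})). Qed.

Lemma phiXn f n : phi (f ^+ n) = phi f ^+ n.
Proof. exact: (rmorphXn (comp_mpoly lq : {mpoly k[#|P|]} -> {mpoly k[#|P|]})). Qed.

Definition hit (m : 'X_{1..#|P|}) := [exists i, (0 < m i)%N && (enum_val i \in S)].

Lemma X_neq0 (i : 'I_#|P|) : ('X_i : kxP k P) != 0.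
Proof.
apply/eqP => h. have := congr1 (mcoeff U_(i)) h.
rewrite mcoeffXU eqxx mcoeff0 => /eqP; by rewrite oner_eq0.
Qed.

Lemma phi_var p : phi (var k p) = if p \in S then 0 else var k p.
Proof.
by rewrite /phi /var comp_mpolyXU -tnth_nth tnth_mktuple enum_rankK.
Qed.

Lemma phiX m : phi 'X_[m] = if hit m then 0 else 'X_[m].
Proof.
rewrite /phi comp_mpolyX; case: ifP => [/existsP [i /andP [mi iS]]|nh].
  rewrite (bigD1 i) //= tnth_mktuple iS expr0n.
  by case: (m i) mi => // ? _; rewrite mul0r.
rewrite [RHS]mpolyXE_id; apply: eq_bigr => i _; rewrite tnth_mktuple.
case: ifP => // iS; case E: (m i) => [|j]; first by rewrite !expr0.
by move/negbT: nh => /existsPn /(_ i); rewrite E iS.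
Qed.

Lemma pideal_add f g : @pideal k _ P S f -> @pideal k _ P S g -> @pideal k _ P S (f + g).
Proof.
move=> [c ->] [d ->]; exists (fun p => c p + d p).
by rewrite -big_split /=; apply: eq_bigr => p _; rewrite mulrDl.
Qed.

Lemma pideal_mul f g : @pideal k _ P S g -> @pideal k _ P S (f * g).
Proof.
move=> [c ->]; exists (fun p => f * c p).
by rewrite mulr_sumr; apply: eq_bigr => p _; rewrite mulrA.
Qed.

Lemma pideal0 : @pideal k _ P S 0.
Proof. by exists (fun _ => 0); rewrite big1 // => p _; rewrite mul0r. Qed.

Lemma pidealX m : hit m -> @pideal k _ P S 'X_[m].
Proof.
move=> /existsP [i /andP [mi iS]].
have -> : ('X_[m] : {mpoly k[#|P|]}) = 'X_[m - U_(i)] * 'X_i.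
  rewrite -mpolyXD; congr 'X_[_]; apply/mnmP => j.
  rewrite mnmDE mnmBE mnm1E; case: eqP => [<-|_]; last by rewrite subn0 addn0.
  by rewrite subnK.
apply: pideal_mul.
exists (fun p => if p == enum_val i then 1 else 0).
rewrite (bigD1 (enum_val i)) //= eqxx mul1r big1 ?addr0 /var ?enum_valK //.
by move=> p /andP [_ /negbTE ->]; rewrite mul0r.
Qed.

Lemma phi_ker f : @pideal k _ P S f -> phi f = 0.
Proof.
move=> [c ->]; rewrite phi_sum big1 // => p pS.
by rewrite phiM phi_var pS mulr0.
Qed.

Lemma ker_hit f : phi f = 0 -> forall m, m \in msupp f -> hit m.
Proof.
move=> h m0 m0f; apply/contraT => nh.
have := congr1 (mcoeff m0) h; rewrite mcoeff0.
rewrite /phi comp_mpolyEX raddf_sum /=.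
rewrite (bigD1_seq m0) //= ?msupp_uniq // big1 ?addr0.
  rewrite mcoeffZ -/(phi _) phiX (negbTE nh) mcoeffX eqxx mulr1 => /eqP.
  by rewrite mcoeff_eq0 m0f.
move=> m /negbTE mm0; rewrite mcoeffZ -/(phi _) phiX.
by case: ifP => _; rewrite ?mcoeff0 ?mcoeffX ?mm0 mulr0.
Qed.

Lemma hit_pideal f : (forall m, m \in msupp f -> hit m) -> @pideal k _ P S f.
Proof.
move=> h; rewrite (mpolyE f); rewrite big_seq.
apply: (big_ind (@pideal k _ P S)); [exact: pideal0 | exact: pideal_add |].
move=> m /h /pidealX; rewrite -mul_mpolyC; exact: pideal_mul.
Qed.

Lemma pidealE f : @pideal k _ P S f <-> phi f = 0.
Proof.
split; first exact: phi_ker.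
by move/ker_hit; exact: hit_pideal.
Qed.

End Aux.

Theorem lemma3p17 (k : fieldType) (disp : Order.disp_t) (P : finPOrderType disp)
    (S : {set P}) :
  (poset_ideal S ->
     [/\ monomial_ideal (@pideal k _ P S), prime_ideal (@pideal k _ P S)
       & P_stable (@pideal k _ P S)]) /\
  (P_stable (@pideal k _ P S) -> poset_ideal S).
Proof.
split.
  move=> Sid; split.
  - move=> f; split.
      move=> /pidealE /ker_hit h m /h hm; apply: pidealX.
      by [].
    move=> h; apply: hit_pideal => m /h /pidealE /ker_hit; apply.
    by rewrite msuppX mem_head.
  - split.
    + exact: pideal0.
    + exact: pideal_add.
    + exact: pideal_mul.
    + move/pidealE; rewrite phi1; apply/eqP; exact: oner_neq0.
    + move=> f g /pidealE; rewrite phiM => /eqP; rewrite mulf_eq0.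
      by case/orP => /eqP /pidealE; [left|right].
  - move=> n B a _ /pidealE hB hC; apply/pidealE; rewrite phiM.
    rewrite phiM in hB; move/eqP: hB; rewrite mulf_eq0 => /orP [].
      by move/eqP => E; rewrite E mul0r.
    rewrite /mB phi_prod => /prodf_eq0 [b bB].
    rewrite phi_var; case: ifP => bS; last by rewrite /var (negbTE (X_neq0 _ _)).
    move=> _; have [C [_ [ab _]]] := hC b bB.
    by rewrite phi_var (Sid a b bS ab) mulr0.
move=> st x y yS xy.
have h : pideal S (mono k (fun _ => 0%N) * var k x)%R.
  apply: (st _ [set y]).
  - by move=> u v /set1P -> /set1P ->.
  - rewrite /mB big_set1 /mono big1 ?mul1r; last by move=> p _; rewrite expr0.
    exists (fun p => if p == y then 1 else 0)%R.
    rewrite (bigD1 y) //= eqxx mul1r big1 ?addr0 //.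
    by move=> p /andP [_ /negbTE ->]; rewrite mul0r.
  - move=> b /set1P ->; exists [:: y]; split; last by split => //=; rewrite xy.
    split.
    + by split => //=.
    + by move=> p /=; rewrite in_set1 add0n addn0 eq_sym.
    + move=> C' _ hC'; case: C' hC' => [|c1 [|c2 r]] //= hC'.
      have := hC' c1; have := hC' c2; rewrite /= !in_set1 !add0n.
      rewrite !eqxx; case: (c2 =P y) => [->|_]; case: (c1 =P y) => [->|_]; rewrite ?eqxx /= ?addnS ?addSn // ?add0n ?addn0 ?ltnS ?leqn0 //.
move/pidealE: h; rewrite phiM /mono phi_prod.
rewrite big1 ?mul1r; last by move=> p _; rewrite expr0 phi1.
rewrite phi_var; case: ifP => // _ /eqP.
by rewrite (negbTE (X_neq0 _ _)).
Qed.
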